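(* Let $M$ be a magma satisfying $(xy)z = xx$, $x(yz) = xx$ and $xx = yy$ for all $x,y,z\in M$. Then $M$ satisfies $xy = yx$ for all $x,y\in M$ if and only if $M$ avoids both magmas $F$ (on $\{0,1,2,3\}$) and $G$ (on $\{0,1,2,3,4\}$) with Cayley tables \[ \begin{array}{c|cccc} F & 0 & 1 & 2 & 3 \\ \hline 0 & 0 & 0 & 0 & 0 \\ 1 & 0 & 0 & 3 & 0 \\ 2 & 0 & 0 & 0 & 0 \\ 3 & 0 & 0 & 0 & 0 \end{array} \qquad \begin{array}{c|ccccc} G & 0 & 1 & 2 & 3 & 4\\ \hline 0 & 0 & 0 & 0 & 0 & 0\\ 1 & 0 & 0 & 3 & 0 & 0\\ 2 & 0 & 4 & 0 & 0 & 0\\ 3 & 0 & 0 & 0 & 0 & 0\\ 4 & 0 & 0 & 0 & 0 & 0 \end{array}. \]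
   Context: A magma is a nonempty set with a binary operation, written by juxtaposition. A magma $M$ avoids a magma $F$ if no submagma of $M$ is isomorphic to $F$. *)

(* Defs.v *)
From mathcomp Require Import all_boot.
Set Implicit Arguments. Unset Strict Implicit. Unset Printing Implicit Defensive.

(* A magma: a carrier type with a binary operation; nonemptiness is
   required separately (hypothesis [inhabited M]). *)

Definition submagma (M : Type) (op : M -> M -> M) (S : M -> Prop) : Prop :=
  (exists x, S x) /\ (forall x y, S x -> S y -> S (op x y)).

Definition iso_to_sub (A : Type) (opA : A -> A -> A)
  (M : Type) (opM : M -> M -> M) (S : M -> Prop) : Prop :=
  exists f : A -> M,
    injective f /\ (forall a, S (f a)) /\ (forall m, S m -> exists a, f a = m)
    /\ (forall a b, f (opA a b) = opM (f a) (f b)).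

Definition avoids (M : Type) (opM : M -> M -> M) (A : Type) (opA : A -> A -> A)
  : Prop :=
  ~ exists S : M -> Prop, submagma opM S /\ iso_to_sub opA opM S.

Definition F_op (x y : 'I_4) : 'I_4 :=
  if (nat_of_ord x == 1) && (nat_of_ord y == 2) then inord 3 else inord 0.

Definition G_op (x y : 'I_5) : 'I_5 :=
  if (nat_of_ord x == 1) && (nat_of_ord y == 2) then inord 3
  else if (nat_of_ord x == 2) && (nat_of_ord y == 1) then inord 4
  else inord 0.

(* Main.v *)
Require Import Defs.
From mathcomp Require Import all_boot.
From Stdlib Require Classical_Prop.

Lemma not_avoid (M : Type) (op : M -> M -> M) (A : Type) (opA : A -> A -> A)
  (a0 : A) (f : A -> M) :
  injective f -> (forall x y, f (opA x y) = op (f x) (f y)) -> ~ avoids op opA.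
Proof.
move=> fi fh; apply; exists (fun m => exists i, f i = m); split.
  split; first by exists (f a0), a0.
  by move=> _ _ [i <-] [j <-]; exists (opA i j).
exists f; split=> //; split; first by move=> i; exists i.
by split=> // m [i <-]; exists i.
Qed.

Theorem mainTheorem10 (M : Type) (op : M -> M -> M) (Mne : inhabited M)
  (h1 : forall x y z, op (op x y) z = op x x)
  (h2 : forall x y z, op x (op y z) = op x x)
  (h3 : forall x y, op x x = op y y) :
  (forall x y, op x y = op y x) <->
  (avoids op F_op /\ avoids op G_op).
Proof.
split.
  move=> C; split=> -[S [_ [f [fi [_ [_ fh]]]]]].
    have := fh (inord 1) (inord 2); have := fh (inord 2) (inord 1).
    rewrite /F_op !inordK // /= => E1 E2.
    by have := fi _ _ (etrans E2 (etrans (C _ _) (esym E1))) => /(congr1 (@nat_of_ord _)); rewrite !inordK.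
  have := fh (inord 1) (inord 2); have := fh (inord 2) (inord 1).
  rewrite /G_op !inordK // /= => E1 E2.
  by have := fi _ _ (etrans E2 (etrans (C _ _) (esym E1))) => /(congr1 (@nat_of_ord _)); rewrite !inordK.
move=> [AF AG] a b; apply: Classical_Prop.NNPP => nab.
have := h3 a; move: (op a a) => e He0.
have He x : op x x = e by rewrite -He0.
have L1 x y z : op (op x y) z = e by rewrite h1 He.
have L2 x y z : op z (op x y) = e by rewrite h2 He.
have Le1 z : op e z = e by rewrite -{1}(He a) L1.
have Le2 z : op z e = e by rewrite -{1}(He a) L2.
have ae : a <> e by move=> E; apply: nab; rewrite E Le1 Le2.
have be : b <> e by move=> E; apply: nab; rewrite E Le1 Le2.
have ab : a <> b by move=> E; apply: nab; rewrite E.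
have ab1 : op a b <> a -> op a b <> b -> True by [].
have gen : forall x y, op x y <> e -> x <> e /\ y <> e /\ x <> y /\ op x y <> x /\ op x y <> y.
  move=> x y ne; split; first by move=> E; apply: ne; rewrite E Le1.
  split; first by move=> E; apply: ne; rewrite E Le2.
  split; first by move=> E; apply: ne; rewrite E He.
  split; first by move=> E; apply: ne; rewrite -E L1.
  move=> E; apply: ne; have := L2 x y x; rewrite E => H; by rewrite -E.
have Fcase : forall x y, op x y <> e -> op y x = e -> False.
  move=> x y ne ye; have [xe [ye' [xy [n1 n2]]]] := gen x y ne.
  apply: (@not_avoid _ _ _ F_op ord0 (fun i : 'I_4 => nth e [:: e; x; y; op x y] i) _ _ AF).
    case=> [[|[|[|[|i]]]] Hi] //; case=> [[|[|[|[|j]]]] Hj] //= H;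
    apply/val_inj => /=; congruence.
  case=> [[|[|[|[|i]]]] Hi] //; case=> [[|[|[|[|j]]]] Hj] //;
  rewrite /F_op /= ?inordK //= ?He ?Le1 ?Le2 ?L1 ?L2 ?ye //.
case: (Classical_Prop.classic (op a b = e)) => [E1|E1].
  case: (Classical_Prop.classic (op b a = e)) => [E2|E2].
    by apply: nab; rewrite E1 E2.
  exact: (Fcase b a).
case: (Classical_Prop.classic (op b a = e)) => [E2|E2].
  exact: (Fcase a b).
have [_ [_ [_ [n1 n2]]]] := gen a b E1.
have [_ [_ [_ [n3 n4]]]] := gen b a E2.
apply: (@not_avoid _ _ _ G_op ord0 (fun i : 'I_5 => nth e [:: e; a; b; op a b; op b a] i) _ _ AG).
  case=> [[|[|[|[|[|i]]]]] Hi] //; case=> [[|[|[|[|[|j]]]]] Hj] //= H;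
  apply/val_inj => /=; congruence.
case=> [[|[|[|[|[|i]]]]] Hi] //; case=> [[|[|[|[|[|j]]]]] Hj] //;
rewrite /G_op /= ?inordK //= ?He ?Le1 ?Le2 ?L1 ?L2 //.
Qed.
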